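(* Fix $\mathbf{p}\in\mathbb{Z}^2\setminus\{\mathbf 0\}$ and $\mathbf a\in\mathbb{Z}^2$. For each positive integer $N$ large enough that $\mathbf a\in\mathcal D$, let $n$, $\rho_k$ and the $n\times n$ matrix $A'$ be as defined in the context (depending on $N$). Suppose that, for all sufficiently large $N$, $\rho_0<0$, $\rho_k\ge 0$ for all $k=1,2,\dots,n-1$, and $\rho_k=0$ for at most one $k\in\{1,\dots,n-1\}$. Then for all sufficiently large $N$, the matrix $A'$ has a non-zero real eigenvalue.
   Context: For a positive integer $N$ let $\mathcal D=[-N,N]^2\cap\mathbb{Z}^2$, and for $\mathbf k\in\mathbb{Z}^2$ let $\widehat{\mathbf k}$ denote the unique element of $\mathcal D$ with $\mathbf k-\widehat{\mathbf k}\in(2N+1)\mathbb{Z}^2$. For $\mathbf a\in\mathcal D$ the (Zeitlin) class is $\Sigma'_{\mathbf a}=\{\widehat{\mathbf a+k\mathbf p}:k\in\mathbb{Z}\}$ and $n=|\Sigma'_{\mathbf a}|$; one has $n=(2N+1)/\gcd(2N+1,\gcd(|p_1|,|p_2|))$, which is odd, and $\widehat{\mathbf a+k\mathbf p}$ depends only on $k$ modulo $n$. Assuming $\mathbf 0\notin\Sigma'_{\mathbf a}$, define $\rho_k=\frac{1}{|\mathbf p|^2}-\frac{1}{|\widehat{\mathbf a+k\mathbf p}|^2}$ for $k\in\mathbb{Z}$ (an $n$-periodic sequence). $A'$ is the $n\times n$ matrix with rows and columns indexed by $0,1,\dots,n-1$ (taken modulo $n$) whose entries are $(A')_{j,j+1}=\rho_{j+1}$,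 $(A')_{j,j-1}=-\rho_{j-1}$ (indices mod $n$), and all other entries $0$. (This is the linearisation, restricted to one class and up to the scalar factor $\frac{\Gamma}{\varepsilon}\sin(\varepsilon\,\mathbf a\times\mathbf p)$, $\varepsilon=2\pi/(2N+1)$, of Zeitlin's sine truncation of the 2D Euler equations about the equilibrium with Fourier coefficients $\Gamma$ at $\pm\mathbf p$ and $0$ elsewhere.) *)

(* Defs.v *)
From HB Require Import structures.
From mathcomp Require Import all_boot all_order all_algebra.
From mathcomp Require Import reals.
Set Implicit Arguments. Unset Strict Implicit. Unset Printing Implicit Defensive.
Import Order.TTheory GRing.Theory Num.Theory.
Local Open Scope ring_scope.

Definition Z2 := (int * int)%type.

Definition modulus (N : nat) : int := (2 * N + 1)%N%:Z.

(* hat x for an integer coordinate: the unique element of [-N,N]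
   congruent to x modulo 2N+1. *)
Definition hat1 (N : nat) (x : int) : int :=
  ((x + N%:Z) %% modulus N)%Z - N%:Z.

Definition hat (N : nat) (k : Z2) : Z2 := (hat1 N k.1, hat1 N k.2).

Definition inD (N : nat) (k : Z2) : bool :=
  [&& - N%:Z <= k.1 <= N%:Z & - N%:Z <= k.2 <= N%:Z].

Definition clsElt (N : nat) (p a : Z2) (k : int) : Z2 :=
  hat N (a.1 + k * p.1, a.2 + k * p.2).

(* n = |Sigma'_a|; since hat(a + k p) depends only on k mod (2N+1), the
   class is the set of values for k = 0, ..., 2N. *)
Definition ncls (N : nat) (p a : Z2) : nat :=
  size (undup [seq clsElt N p a k%:Z | k <- iota 0 (2 * N + 1)]).

Definition zero_notin_cls (N : nat) (p a : Z2) : Prop :=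
  forall k : int, clsElt N p a k != (0, 0).

Definition sqnorm (k : Z2) : int := k.1 ^+ 2 + k.2 ^+ 2.

Definition rho (R : realType) (N : nat) (p a : Z2) (k : int) : R :=
  ((sqnorm p)%:~R)^-1 - ((sqnorm (clsElt N p a k))%:~R)^-1.

Definition Aprime (R : realType) (N : nat) (p a : Z2) : 'M[R]_(ncls N p a) :=
  \matrix_(i < ncls N p a, j < ncls N p a)
    ((if (j : nat) == (((i : nat) + 1) %% ncls N p a)%N then
        rho R N p a ((i : nat)%:Z + 1) else 0)
     + (if (j : nat) == (((i : nat) + ncls N p a - 1) %% ncls N p a)%N then
        - rho R N p a ((i : nat)%:Z - 1) else 0)).

Definition rho_hyp (R : realType) (N : nat) (p a : Z2) : Prop :=
  [/\ zero_notin_cls N p a,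
      rho R N p a 0 < 0,
      (forall k : nat, (1 <= k <= (ncls N p a).-1)%N -> 0 <= rho R N p a k%:Z) &
      (count (fun k : nat => rho R N p a k%:Z == 0%R) (iota 1 (ncls N p a).-1) <= 1%N)%N].

(* Main.v *)
Set Warnings "-notation-overridden,-ambiguous-paths,-notation-incompatible-prefix".
From HB Require Import structures.
Require Import Defs.
From mathcomp Require Import all_boot all_order all_fingroup all_algebra ring lra zify.
From mathcomp Require Import reals polyrcf.
Import Order.TTheory GRing.Theory Num.Theory.
Local Open Scope ring_scope.

Definition Path (R : nzRingType) m (s : nat -> R) : 'M[R]_m :=
  \matrix_(k, l) (s l * ((l == k.+1 :> nat)%:R - (l.+1 == k :> nat)%:R)).

Arguments Path {R} m s.

Lemma det_Path_step (R : comNzRingType) k (s : nat -> R) :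
  \det (Path k.+2 s) = s 0%N * s 1%N * \det (Path k (fun l => s l.+2)).
Proof.
rewrite (expand_det_row _ ord0).
pose j1 : 'I_k.+2 := Ordinal (isT : (1 < k.+2)%N).
rewrite (bigD1 j1) //= big1 ?addr0; last first.
  move=> j hj; rewrite !mxE /=.
  by move: hj; rewrite -val_eqE /= => /negPf ->; rewrite subr0 mulr0 mul0r.
rewrite !mxE /= subr0 mulr1 /cofactor /=.
rewrite (expand_det_col _ ord0) (bigD1 ord0) //= big1 ?addr0; last first.
  move=> i hi; rewrite !mxE /=.
  rewrite /bump /= ?add1n eqSS; move: hi; rewrite -val_eqE /= eq_sym => /negPf ->.
  by rewrite subrr mulr0 mul0r.
rewrite !mxE /= /cofactor /= expr0 mul1r.
have -> : row' ord0 (col' ord0 (row' ord0 (col' j1 (Path k.+2 s)))) =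
          Path k (fun l => s l.+2).
  by apply/matrixP => a b; rewrite !mxE /=.
rewrite expr1 sub0r; ring.
Qed.

Lemma det_Path (R : comNzRingType) m (s : nat -> R) :
  \det (Path (m.*2) s) = \prod_(l < m.*2) s l.
Proof.
elim: m s => [|m IH] s; first by rewrite det_mx00 big_ord0.
rewrite doubleS det_Path_step IH !big_ord_recl -mulrA; congr (_ * (_ * _)).
Qed.

Definition Sperm n : 'S_n := perm (@ordS_inj n).

Definition Cyc (R : nzRingType) n (r : 'I_n -> R) : 'M[R]_n :=
  \matrix_(i, j) (r j * ((j == Sperm n i)%:R - (j == (Sperm n)^-1%g i)%:R)).
Arguments Cyc {R n} r.

Lemma SpermV n (x : 'I_n) : (Sperm n)^-1%g x = ord_pred x.
Proof. by apply: (@perm_inj _ (Sperm n)); rewrite permKV permE ord_predK. Qed.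

Lemma cofactor_conj (R : comNzRingType) n (M : 'M[R]_n) (t : 'S_n) i :
  cofactor (\matrix_(k, l) M (t k) (t l)) i i = cofactor M (t i) (t i).
Proof.
rewrite !expand_cofactor [RHS](reindex_inj (conjg_inj t)) /=.
apply: eq_big => [s | s _]; first by rewrite permJ (inj_eq perm_inj).
rewrite odd_permJ; congr (_ * _).
rewrite [RHS](reindex_inj (@perm_inj _ t)) /=.
apply: eq_big => [k | k _]; first by rewrite (inj_eq perm_inj).
by rewrite !mxE permJ.
Qed.

Lemma Cyc_conj (R : comNzRingType) n (r : 'I_n -> R) (t : 'S_n) :
  commute t (Sperm n) ->
  \matrix_(k, l) Cyc r (t k) (t l) = Cyc (fun j => r (t j)).
Proof.
move=> ct; have ctV : commute t (Sperm n)^-1 by apply: commuteV.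
apply/matrixP => k l; rewrite !mxE.
have -> : Sperm n (t k) = t (Sperm n k) by rewrite -!permM ct.
have -> : (Sperm n)^-1%g (t k) = t ((Sperm n)^-1%g k) by rewrite -!permM ctV.
by rewrite !(inj_eq perm_inj).
Qed.

Lemma Sperm_iter n (m : nat) : val ((Sperm n.+1 ^+ m)%g ord0) = (m %% n.+1)%N.
Proof.
elim: m => [|m IH]; first by rewrite expg0 perm1 mod0n.
by rewrite expgSr permM permE /= IH -addn1 modnDml addn1.
Qed.

Lemma minor0_Cyc (R : comNzRingType) n (r : 'I_n.+1 -> R) :
  row' ord0 (col' ord0 (Cyc r)) = Path n (fun l => r (inord l.+1)).
Proof.
apply/matrixP => k l; rewrite !mxE SpermV permE /=.
have -> : inord l.+1 = lift ord0 l by apply: val_inj; rewrite /= inordK // ltnS.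
congr (_ * (_%:R - _%:R)); rewrite -val_eqE /= /bump /= ?add1n.
  have := ltn_ord k; rewrite leq_eqVlt => /orP[/eqP hk|hk].
    by rewrite hk modnn; have := ltn_ord l; rewrite ltn_neqAle => /andP[/negPf -> _].
  by rewrite modn_small ?ltnS // eqSS.
by rewrite add0n modnDr modn_small // ltnS; apply: ltnW.
Qed.


Lemma cofactor_Cyc (R : comNzRingType) n (r : 'I_n -> R) (i : 'I_n) :
  odd n -> cofactor (Cyc r) i i = \prod_(j | j != i) r j.
Proof.
move=> hodd; move: r i; rewrite -[n](odd_double_half n) hodd add1n.
move: (n./2) => m r i.
pose t := (Sperm (m.*2).+1 ^+ i)%g.
have t0 : t ord0 = i.
  by apply: val_inj; rewrite Sperm_iter modn_small.
have ct : commute t (Sperm (m.*2).+1) by apply: commute_sym; apply: commuteX.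
rewrite -t0 -cofactor_conj Cyc_conj //.
rewrite /cofactor expr0 mul1r minor0_Cyc det_Path.
rewrite (reindex_inj (@perm_inj _ t)) /=.
rewrite (eq_bigl (fun j => j != ord0)); last by move=> j; rewrite (inj_eq perm_inj).
rewrite [RHS]big_mkcond big_ord_recl /= mul1r.
apply: eq_bigr => l _; rewrite /=.
have -> : inord l.+1 = lift ord0 l :> 'I_(m.*2).+1.
  by apply: val_inj; rewrite /= inordK // ltnS.
by [].
Qed.

Lemma coef1_prod (R : comNzRingType) (I : eqType) (e : seq I) (F : I -> {poly R}) :
  uniq e ->
  (\prod_(i <- e) F i)`_1 = \sum_(i <- e) (F i)`_1 * \prod_(j <- e | j != i) (F j)`_0.
Proof.
elim: e => [|x e IH] /=; first by rewrite big_nil coef1 big_nil.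
move=> /andP[xe ue]; rewrite !big_cons coefM big_ord_recr big_ord1 /= (IH ue).
rewrite coef0_prod addrC; congr (_ + _).
  rewrite eqxx /=; congr (_ * _).
  rewrite [RHS]big_seq_cond [in LHS]big_seq; apply: eq_bigl => j.
  by case: (boolP (j \in e)) => //= je; apply/esym/eqP => ejx; rewrite -ejx je in xe.
rewrite big_distrr [LHS]big_seq [RHS]big_seq; apply: eq_bigr => i ie.
rewrite big_cons.
have -> : (x != i) by apply/eqP => eix; rewrite eix ie in xe.
by rewrite mulrCA.
Qed.

Lemma coef_sign (R : nzRingType) k (p : {poly R}) j :
  ((-1)^+k * p)`_j = (-1)^+k * p`_j.
Proof.
elim: k => [|k IH]; first by rewrite !expr0 !mul1r.
by rewrite !exprS -!mulrA !mulN1r coefN IH.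
Qed.

Lemma char_poly_coef1 (R : comNzRingType) n (M : 'M[R]_n) :
  (char_poly M)`_1 = \sum_i cofactor (- M) i i.
Proof.
rewrite /char_poly /determinant coef_sum.
under eq_bigr => s _ do rewrite coef_sign.
under eq_bigr => s _ do rewrite (@coef1_prod _ _ _ _ (index_enum_uniq _)).
under eq_bigr => s _ do rewrite big_distrr /=.
rewrite exchange_big /=; apply: eq_bigr => i _.
rewrite expand_cofactor [RHS]big_mkcond /=; apply: eq_bigr => s _.
rewrite !mxE coefB coefMn coefX coefC /= subr0.
case: (boolP (s i == i)) => hs.
  rewrite eq_sym hs mulr1n mul1r; congr (_ * _); apply: eq_big => [j|j _].
    by rewrite eq_sym.
  by rewrite !mxE coefB coefMn coefX coefC /= mul0rn sub0r.
by rewrite eq_sym (negPf hs) mulr0n mul0r mulr0.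
Qed.

Lemma sum_eq1 (R : nzRingType) n (j : 'I_n) (f : 'I_n -> 'I_n) :
  bijective f -> \sum_i ((j == f i)%:R : R) = 1.
Proof.
move=> [g fg gf]; rewrite (reindex_inj (can_inj gf)) /=.
under eq_bigr => k _ do rewrite gf.
rewrite (bigD1 j) //= eqxx big1 ?addr0 // => k /negPf; rewrite eq_sym => ->.
by [].
Qed.

Lemma det_Cyc0 (R : fieldType) n (r : 'I_n -> R) : (0 < n)%N -> \det (Cyc r) = 0.
Proof.
move=> hn; apply/eqP/det0P; exists (const_mx 1).
  apply/eqP => /matrixP /(_ 0 (Ordinal hn)); rewrite !mxE => /eqP.
  by rewrite oner_eq0.
apply/rowP => j; rewrite !mxE.
under eq_bigr => i _ do rewrite !mxE mul1r mulrBr.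
rewrite sumrB -!mulr_sumr !sum_eq1 ?subrr //.
  by exists (Sperm n); [apply: permKV | apply: permK].
by exists (Sperm n)^-1%g; [apply: permK | apply: permKV].
Qed.

Lemma Cyc_coef1 (R : comNzRingType) n (r : 'I_n -> R) : odd n ->
  (char_poly (Cyc r))`_1 = \sum_i \prod_(j | j != i) r j.
Proof.
move=> hodd; rewrite char_poly_coef1; apply: eq_bigr => i _.
rewrite -scaleN1r cofactorZ cofactor_Cyc //.
case: n hodd r i => [|n] //= hodd r i.
by rewrite -signr_odd (negPf hodd) expr0 mul1r.
Qed.
Lemma eig_of_coef (R : rcfType) n (M : 'M[R]_n) :
  \det M = 0 -> (char_poly M)`_1 < 0 -> exists t : R, 0 < t /\ eigenvalue M t.
Proof.
move=> hdet hc.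
have r0 : root (char_poly M) 0.
  by rewrite /root horner_coef0 char_poly_det hdet mulr0.
have [q hq] := factor_theorem _ _ r0.
rewrite subr0 in hq.
have q0 : q`_0 < 0 by move: hc; rewrite hq coefMX.
have lq : lead_coef q = 1.
  by have := char_poly_monic M; rewrite hq monicE lead_coefMX => /eqP.
have [T hT] : exists T, forall x, x >= T -> q.[x] >= lead_coef q.
  by apply: poly_pinfty_gt_lc; rewrite lq ltr01.
pose b := Num.max T 1.
have hb : 0 < b by rewrite lt_max ltr01 orbT.
have qb : q.[b] >= 1 by rewrite -lq; apply: hT; rewrite le_max lexx.
have [x hx rx] : {x | x \in `]0, b[ & root q x}.
  apply: poly_ivtoo; first exact: ltW.
  rewrite horner_coef0 pmulr_llt0 //; exact: lt_le_trans ltr01 qb.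
move: hx; rewrite in_itv /= => /andP[x0 _].
exists x; split => //.
rewrite eigenvalue_root_char /root hq hornerMX.
by move: rx => /rootP ->; rewrite mul0r.
Qed.
Lemma neg_sum (R : realFieldType) n (r : 'I_n.+1 -> R) (P : R) :
  (0 < n)%N -> r ord0 < 0 -> (forall j, j != ord0 -> 0 <= r j < P) ->
  (forall j k, j != ord0 -> k != ord0 -> r j = 0 -> r k = 0 -> j = k) ->
  P <= - r ord0 * n%:R ->
  \sum_i \prod_(j | j != i) r j < 0.
Proof.
move=> n0 r0 rpos uniq0 hP.
case: (pickP (fun j => (j != ord0) && (r j == 0))) => [m /andP[m0 /eqP rm]|nz].
  rewrite [\sum_i _](bigD1 m) //= [X in _ + X]big1 ?addr0; last first.
    by move=> i im; rewrite (bigD1 m) 1?eq_sym //= rm mul0r.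
  rewrite (bigD1 ord0) 1?eq_sym //= pmulr_llt0 //.
  apply: prodr_gt0 => j /andP[jm j0].
  have /andP[h1 _] := rpos j j0; rewrite lt_neqAle h1 andbT eq_sym.
  by apply/eqP => rj0; move/negP: jm; apply; apply/eqP; apply: uniq0.
have rp j : j != ord0 -> 0 < r j.
  move=> j0; have /andP[h1 _] := rpos j j0; rewrite lt_neqAle h1 andbT eq_sym.
  by have := nz j; rewrite j0 /= => ->.
have P0 : 0 < P.
  have j1 : (ordS (@ord0 n)) != ord0.
    by rewrite -val_eqE /= modn_small.
  by have /andP[_ h] := rpos _ j1; apply: lt_trans h; apply: rp.
set Q := \prod_(j | j != ord0) r j.
have Q0 : 0 < Q by apply: prodr_gt0 => j; apply: rp.
have key : forall i, i != ord0 -> P * \prod_(j | j != i) r j < r ord0 * Q.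
  move=> i i0.
  have hQ : Q = r i * \prod_(j | (j != i) && (j != ord0)) r j.
    by rewrite /Q (bigD1 i) //=; congr (_ * _); apply: eq_bigl => j; rewrite andbC.
  rewrite (bigD1 ord0) 1?eq_sym //= hQ.
  set X := \prod_(j | _ && _) r j.
  have X0 : 0 < X by apply: prodr_gt0 => j /andP[_ j0]; apply: rp.
  have /andP[_ riP] := rpos i i0.
  have : r i * X < P * X by rewrite ltr_pM2r.
  move: (r ord0) r0 => c c0 h; nra.
have : P * (\sum_i \prod_(j | j != i) r j) < P * Q + r ord0 * Q * n%:R.
  rewrite mulr_sumr (bigD1 ord0) //= ltrD2l.
  apply: lt_le_trans (_ : \sum_(i | i != ord0) r ord0 * Q <= _).
    apply: ltr_sum; last by move=> i; apply: key.
    by apply/hasP; exists (ordS (@ord0 n)); rewrite ?mem_index_enum //= -val_eqE /= modn_small.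
  by rewrite sumr_const cardC1 card_ord /= mulr_natr.
move: (\sum_i _) => S h.
have h2 : P * Q + r ord0 * Q * n%:R <= 0.
  have : P + r ord0 * n%:R <= 0 by lra.
  move: (r ord0 * n%:R) => c hc; nra.
have : P * S < 0 by lra.
by rewrite pmulr_rlt0.
Qed.
Definition Gp (p : Z2) : nat := gcdn `|p.1| `|p.2|.
Definition dd (N : nat) (p : Z2) : nat := ((2*N+1) %/ gcdn (2*N+1) (Gp p))%N.

Lemma hat1_eq N x y : (hat1 N x == hat1 N y) = (modulus N %| x - y)%Z.
Proof.
have e : forall u v w : int, (u - w == v - w) = (u == v).
  by move=> u v w; apply/eqP/eqP => [h|->//]; have := congr1 (+%R^~ w) h; rewrite !subrK.
rewrite /hat1 e eqz_mod_dvd.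
have -> : x + N%:Z - (y + N%:Z) = x - y by ring.
by [].
Qed.

Lemma dvd_key (Mn P1 P2 u : nat) : (0 < Mn)%N ->
  ((Mn %| u * P1) && (Mn %| u * P2))%N = (Mn %/ gcdn Mn (gcdn P1 P2) %| u)%N.
Proof.
move=> hM; rewrite -dvdn_gcd -muln_gcdr.
have -> : (Mn %| u * gcdn P1 P2)%N = (Mn %| gcdn (u * Mn) (u * gcdn P1 P2))%N.
  by rewrite dvdn_gcd (dvdn_mull u (dvdnn Mn)).
rewrite -muln_gcdr.
have hg : (0 < gcdn Mn (gcdn P1 P2))%N by rewrite gcdn_gt0 hM.
rewrite -{1}(divnK (dvdn_gcdl Mn (gcdn P1 P2))).
by rewrite dvdn_pmul2r.
Qed.

Lemma cls_eq N p a k l :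
  (clsElt N p a k == clsElt N p a l) = (dd N p %| `|k - l|)%N.
Proof.
rewrite /clsElt /hat xpair_eqE /= !hat1_eq.
have -> : a.1 + k * p.1 - (a.1 + l * p.1) = (k - l) * p.1 by ring.
have -> : a.2 + k * p.2 - (a.2 + l * p.2) = (k - l) * p.2 by ring.
rewrite !dvdzE !abszM /dd /Gp -dvd_key //.
by rewrite addn1.
Qed.

Lemma dd_facts N p : (0 < Gp p)%N ->
  [/\ (dd N p * gcdn (2*N+1) (Gp p) = 2*N+1)%N, (0 < dd N p)%N,
      (dd N p <= 2*N+1)%N, odd (dd N p) & (2*N+1 <= dd N p * Gp p)%N].
Proof.
move=> hG.
have e : (dd N p * gcdn (2*N+1) (Gp p) = 2*N+1)%N by rewrite divnK // dvdn_gcdl.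
have hg : (gcdn (2*N+1) (Gp p) <= Gp p)%N by rewrite dvdn_leq // dvdn_gcdr.
have hg0 : (0 < gcdn (2*N+1) (Gp p))%N by rewrite gcdn_gt0 hG orbT.
have od : odd (dd N p * gcdn (2*N+1) (Gp p)) by rewrite e oddD oddM.
split => //.
- by move: e; case: (dd N p) => //; lia.
- nia.
- by move: od; rewrite oddM => /andP[].
- nia.
Qed.

Lemma cls_period N p a k : clsElt N p a (k + (dd N p)%:Z) = clsElt N p a k.
Proof.
apply/eqP; rewrite cls_eq.
have -> : k + (dd N p)%:Z - k = (dd N p)%:Z by ring.
by [].
Qed.

Lemma ncls_eq N p a : (0 < Gp p)%N -> ncls N p a = dd N p.
Proof.
move=> hG; have [e d0 dM _ _] := dd_facts N p hG.
set d := dd N p in e d0 dM *.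
pose f := fun k : nat => clsElt N p a k%:Z.
have uf : uniq [seq f k | k <- iota 0 d].
  rewrite map_inj_in_uniq ?iota_uniq // => k l; rewrite !mem_iota !add0n => hk hl.
  move/eqP; rewrite /f cls_eq => hd.
  case: (boolP (`|k%:Z - l%:Z|%N == 0%N)) => [|hnz]; first by lia.
  have := dvdn_leq (etrans (lt0n _) hnz) hd; lia.
rewrite /ncls -/f.
have pe : perm_eq (undup [seq f k | k <- iota 0 (2 * N + 1)]) [seq f k | k <- iota 0 d].
  apply: uniq_perm => //; first exact: undup_uniq.
  move=> x; rewrite mem_undup; apply/mapP/mapP => [[k hk ->]|[k hk ->]].
    exists (k %% d)%N; first by rewrite mem_iota add0n ltn_mod.
    apply/eqP; rewrite /f cls_eq.
    have -> : `|k%:Z - (k %% d)%N%:Z|%N = (k %/ d * d)%N.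
      by rewrite {1}(divn_eq k d) PoszD addrK.
    exact: dvdn_mull.
  exists k => //; move: hk; rewrite !mem_iota !add0n => hk; exact: leq_trans hk dM.
by rewrite (perm_size pe) size_map size_iota.
Qed.

Lemma rho_eq (R : realType) N p a k l : (dd N p %| `|k - l|)%N ->
  rho R N p a k = rho R N p a l.
Proof. by rewrite -(cls_eq N p a) /rho => /eqP ->. Qed.

Lemma absz_mod (x n : nat) : `|x%:Z - (x %% n)%N%:Z|%N = (x %/ n * n)%N.
Proof. by rewrite {1}(divn_eq x n) PoszD addrK. Qed.

Lemma Aprime_Cyc (R : realType) N p a : (0 < Gp p)%N ->
  Aprime R N p a = Cyc (fun j : 'I_(ncls N p a) => rho R N p a (j : nat)%:Z).
Proof.
move=> hG; have hn := ncls_eq N p a hG.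
have [_ d0 _ _ _] := dd_facts N p hG.
apply/matrixP => i j; rewrite !mxE SpermV permE /=.
rewrite -!val_eqE /= addn1 subn1.
move: i j; rewrite -/(ncls N p a) => i j.
have r1 : val j = (i.+1 %% ncls N p a)%N -> rho R N p a (i%:Z + 1) = rho R N p a j.
  move=> e1; apply: rho_eq; rewrite -PoszD addn1 e1 absz_mod -hn.
  exact: dvdn_mull.
have r2 : val j = ((i + ncls N p a).-1 %% ncls N p a)%N ->
    rho R N p a (i%:Z - 1) = rho R N p a j.
  move=> e2; apply: rho_eq; rewrite -hn.
  set n := ncls N p a in e2 hn *.
  set y := (i + n).-1 in e2.
  have hy : (y = y %/ n * n + j)%N by rewrite e2 -divn_eq.
  have hy' : (y + 1 = i + n)%N by rewrite /y; lia.
  move: (y %/ n)%N hy => q hy.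
  rewrite -[X in (X %| _)%N]/(`|n%:Z|%N) -dvdzE.
  have -> : i%:Z - 1 - j%:Z = (q%:Z - 1) * n%:Z by nia.
  exact: dvdz_mull (dvdzz _).
case: eqP => [e1|_]; case: eqP => [e2|_].
- by rewrite (r1 e1) (r2 e2) /=; ring.
- by rewrite (r1 e1) /=; ring.
- by rewrite (r2 e2) /=; ring.
- by rewrite /=; ring.
Qed.

Lemma neg_sum' (R : realFieldType) n (r : 'I_n -> R) (P : R) (f : nat -> R) :
  (1 < n)%N -> (forall j : 'I_n, r j = f j) -> f 0%N < 0 ->
  (forall k, (1 <= k < n)%N -> 0 <= f k < P) ->
  (forall k l, (1 <= k < n)%N -> (1 <= l < n)%N -> f k = 0 -> f l = 0 -> k = l) ->
  P <= - f 0%N * (n.-1)%:R ->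
  \sum_i \prod_(j | j != i) r j < 0.
Proof.
case: n r => [|n] r // hn hr f0 fpos funiq hP.
have j0 : forall j : 'I_n.+1, (j != ord0) = (1 <= j)%N.
  by move=> j; rewrite -val_eqE /= lt0n.
apply: (@neg_sum R n r P) => //.
- by rewrite hr.
- by move=> j; rewrite j0 hr => hj; apply: fpos; rewrite hj ltn_ord.
- move=> j k; rewrite !j0 !hr => hj hk ej ek; apply: val_inj.
  by apply: funiq; rewrite ?hj ?hk ?ltn_ord.
- by rewrite hr.
Qed.

Lemma sqnorm_gt0 (h : Z2) : h != (0, 0) -> 0 < sqnorm h.
Proof.
case: h => x y; rewrite xpair_eqE negb_and /sqnorm /= => /orP[] hx.
  by case: (ltgtP x 0) hx => // hx _; nia.
by case: (ltgtP y 0) hx => // hy _; nia.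
Qed.

Lemma hat1_small N x : - N%:Z <= x <= N%:Z -> hat1 N x = x.
Proof.
move=> /andP[h1 h2]; rewrite /hat1 /modulus modz_small; first by rewrite addrK.
apply/andP; split; lia.
Qed.

Lemma count_le1 (P : pred nat) s k l : uniq s -> (count P s <= 1)%N ->
  k \in s -> l \in s -> P k -> P l -> k = l.
Proof.
move=> us hc ks ls pk pl; apply/eqP/negPn/negP => kl.
have : (size [:: k; l] <= size (filter P s))%N.
  apply: uniq_leq_size; first by rewrite /= inE kl.
  by move=> x; rewrite !inE mem_filter => /orP[]/eqP->; apply/andP.
by rewrite size_filter /=; lia.
Qed.

Theorem theorem1 (R : realType) (p a : Z2) :
  p != (0, 0) ->
  (exists N0 : nat, forall N : nat, (N0 <= N)%N -> rho_hyp R N p a) ->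
  exists N1 : nat, forall N : nat, (N1 <= N)%N ->
    inD N a /\ exists lambda : R, lambda != 0 /\ eigenvalue (Aprime R N p a) lambda.
Proof.
move=> hp [N0 H].
have hG : (0 < Gp p)%N.
  by clear H; move: hp; case: p => x y; rewrite xpair_eqE negb_and /Gp gcdn_gt0 !absz_gt0.
exists (N0 + (`|a.1| + `|a.2|) + Gp p * (`|sqnorm a| + 3))%N => N hN.
have hD : inD N a by rewrite /inD; apply/andP; split; apply/andP; split; lia.
split => //.
have [hz r0 rpos cnt] := H N (leq_trans (leq_trans (leq_addr _ _) (leq_addr _ _)) hN).
have hn := ncls_eq N p a hG.
have [_ d0 _ dodd dbig] := dd_facts N p hG.
have nbig : (`|sqnorm a| + 3 <= ncls N p a)%N by rewrite hn; nia.
rewrite Aprime_Cyc //.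
have ca : clsElt N p a 0 = a.
  move: hD; rewrite /inD /clsElt /hat /= !mul0r !addr0 => /andP[h1 h2].
  by rewrite !hat1_small //; case: (a).
set sp := sqnorm p.
set sa := sqnorm a.
have sp0 : 0 < sp by apply: sqnorm_gt0.
have sa0 : 0 < sa by rewrite /sa -ca; apply: sqnorm_gt0; apply: hz.
have rlt : forall k, rho R N p a k < (sp%:~R)^-1.
  move=> k; rewrite /rho ltrBlDr ltrDl invr_gt0 ltr0z.
  exact: sqnorm_gt0 (hz k).
have [t [t0 ht]] : exists t : R, 0 < t /\
    eigenvalue (Cyc (fun j : 'I_(ncls N p a) => rho R N p a (j : nat)%:Z)) t.
  apply: eig_of_coef; first by apply: det_Cyc0; lia.
  rewrite Cyc_coef1; last by rewrite hn.
  apply: (@neg_sum' R _ _ ((sp%:~R)^-1) (fun k : nat => rho R N p a k%:Z)) => //.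
  - lia.
  - move=> k hk; rewrite rlt andbT; apply: rpos; lia.
  - move=> k l hk hl ek el; apply: (@count_le1 _ _ k l (iota_uniq 1 (ncls N p a).-1) cnt).
    + by rewrite mem_iota; lia.
    + by rewrite mem_iota; lia.
    + by rewrite /= ek.
    + by rewrite /= el.
  - move: r0; rewrite /rho ca -/sp -/sa => r0.
    have ssp : sa < sp.
      move: r0; rewrite subr_lt0 ltf_pV2 ?posrE ?ltr0z //.
      by rewrite ltr_int => h.
    have sasp : sa + 1 <= sp by lia.
    have hm : sa <= ((ncls N p a).-1)%:Z by lia.
    move: hm sasp sa0 sp0; rewrite -!(ler_int R) -!(ltr_int R) intrD.
    rewrite -[((ncls N p a).-1)%:Z%:~R]/(((ncls N p a).-1)%:R).
    move: (sp%:~R : R) (sa%:~R : R) ((ncls N p a).-1)%:R => y x m hm hxy hx hy.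
    have uy : y^-1 * y = 1 by rewrite mulVf // gt_eqF.
    have wx : x^-1 * x = 1 by rewrite mulVf // gt_eqF.
    have u0 : 0 < y^-1 by rewrite invr_gt0.
    have w0 : 0 < x^-1 by rewrite invr_gt0.
    move: (y^-1) (x^-1) uy wx u0 w0 => u w uy wx u0 w0.
    have e : w - u = (y - x) * w * u.
      have -> : (y - x) * w * u = w * (u * y) - u * (w * x) by ring.
      by rewrite uy wx !mulr1.
    rewrite opprB e.
    have h1 : x <= (y - x) * m by nra.
    have : x * (w * u) <= (y - x) * m * (w * u) by rewrite ler_pM2r // mulr_gt0.
    have -> : x * (w * u) = u by rewrite mulrA (mulrC x w) wx mul1r.
    have -> : (y - x) * w * u * m = (y - x) * m * (w * u) by ring.
    by [].
exists t; split => //; by rewrite gt_eqF.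
Qed.
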